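(* Let $H_0,H_1$ be complex Hilbert spaces, $G$ a densely defined closed operator from $H_0$ into $H_1$ and $D$ a densely defined closed operator from $H_1$ into $H_0$ with $-G^*\subset D$. Let $m\in\mathcal L(H_0)$ (not necessarily coercive) and let $a\in\mathcal L(H_1)$ be coercive. Let $\mathring T\in\mathcal L(\mathrm{dom}(\mathring G))$ be defined by $(\mathring Tu,v)_{\mathrm{dom}(\mathring G)}=(aGu,Gv)_{H_1}+(mu,v)_{H_0}$ for all $u,v\in\mathrm{dom}(\mathring G)$, and suppose $\mathrm{ran}(\mathring T)$ is closed in $\mathrm{dom}(\mathring G)$. Then the Dirichlet-to-Neumann graph $\Lambda$ associated with $-DaG+m$ satisfies \[ \mathrm{dom}(\Lambda)=\{u_0\in\mathrm{BD}(G):\big(\Phi(\pi_{\mathrm{BD}(D)}a^*Gv)\big)(u_0)=0\text{ for all }v\in\ker(m^*-Da^*\mathring G)\}, \] where $\Phi\colon\mathrm{BD}(D)\to\mathrm{BD}(G)'$ is given by $(\Phi(q))(u)=(Dq,u)_{H_0}+(q,Gu)_{H_1}$.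
   Context: $\mathring D=-G^*$, $\mathring G=-D^*$. Domains carry graph inner products. $\mathrm{BD}(G)$ (resp. $\mathrm{BD}(D)$) is the orthogonal complement of $\mathrm{dom}(\mathring G)$ in $\mathrm{dom}(G)$ (resp. of $\mathrm{dom}(\mathring D)$ in $\mathrm{dom}(D)$) with induced inner products; $\pi_{\mathrm{BD}(G)},\pi_{\mathrm{BD}(D)}$ the orthogonal projections. $\mathrm{BD}(G)'$ is the space of continuous antilinear functionals on $\mathrm{BD}(G)$. Coercive: $\mathrm{Re}(ax,x)\ge\mu\|x\|^2$ for some $\mu>0$. The Dirichlet-to-Neumann graph is $\Lambda=\{(\pi_{\mathrm{BD}(G)}u,\pi_{\mathrm{BD}(D)}aGu): u\in\mathrm{dom}(G),\ aGu\in\mathrm{dom}(D),\ mu-DaGu=0\}$, $\mathrm{dom}(\Lambda)$ the set of first components. $\ker(m^*-Da^*\mathring G)=\{v\in\mathrm{dom}(\mathring G):a^*\mathring Gv\in\mathrm{dom}(D),\ m^*v=Da^*\mathring Gv\}$. *)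

(* Defs.v *)
From HB Require Import structures.
From mathcomp Require Import all_boot all_order all_algebra.
From mathcomp Require Import complex.
From mathcomp Require Import reals.
Set Implicit Arguments. Unset Strict Implicit. Unset Printing Implicit Defensive.
Import Order.TTheory GRing.Theory Num.Theory.
Local Open Scope ring_scope.

Section Hilbert.
Variable R : realType.
Local Notation C := (R[i]).

Definition ip_conv (V : lmodType C) (ip : V -> V -> C) (x : nat -> V) (l : V) :=
  forall e : C, 0 < e -> exists N : nat, forall n, (N <= n)%N ->
    ip (x n - l) (x n - l) < e.

Definition ip_cauchy (V : lmodType C) (ip : V -> V -> C) (x : nat -> V) :=
  forall e : C, 0 < e -> exists N : nat, forall n k, (N <= n)%N -> (N <= k)%N ->
    ip (x n - x k) (x n - x k) < e.

Record hilbert (V : lmodType C) := Hilbert {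
  inner : V -> V -> C;
  inner_linear : forall (c : C) x y z, inner (c *: x + y) z = c * inner x z + inner y z;
  inner_conj : forall x y, inner y x = Num.conj (inner x y);
  inner_ge0 : forall x, 0 <= inner x x;
  inner_eq0 : forall x, inner x x = 0 -> x = 0;
  inner_complete : forall x : nat -> V, ip_cauchy inner x -> exists l, ip_conv inner x l
}.

Variables (H0 H1 : lmodType C) (h0 : hilbert H0) (h1 : hilbert H1).

Definition dd_closed (domA : H0 -> Prop) (A : H0 -> H1) :=
  [/\ domA 0,
      (forall (c : C) x y, domA x -> domA y -> domA (c *: x + y)),
      (forall (c : C) x y, domA x -> domA y -> A (c *: x + y) = c *: A x + A y),
      (forall x (e : C), 0 < e -> exists y, domA y /\ inner h0 (x - y) (x - y) < e)
    & (forall (u : nat -> H0) x y, (forall n, domA (u n)) ->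
         ip_conv (inner h0) u x -> ip_conv (inner h1) (fun n => A (u n)) y ->
         domA x /\ A x = y)].

Definition bounded_op (A : H0 -> H1) :=
  (forall (c : C) x y, A (c *: x + y) = c *: A x + A y) /\
  exists M : C, 0 <= M /\ forall x, inner h1 (A x) (A x) <= M * inner h0 x x.

Definition is_adjoint (A : H0 -> H1) (Astar : H1 -> H0) :=
  forall x y, inner h1 (A x) y = inner h0 x (Astar y).

End Hilbert.

Section DtN.
Variable R : realType.
Local Notation C := (R[i]).
Variables (H0 H1 : lmodType C) (h0 : hilbert H0) (h1 : hilbert H1).
Variables (domG : H0 -> Prop) (G : H0 -> H1) (domD : H1 -> Prop) (D : H1 -> H0).

Definition adjG (y : H1) (z : H0) :=
  forall x, domG x -> inner h1 (G x) y = inner h0 x z.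
(* (u, w) in the graph of Gring := - D^*  *)
Definition Gring (u : H0) (w : H1) :=
  forall y, domD y -> inner h0 (D y) u = inner h1 y (- w).
Definition domGring (u : H0) := exists w, Gring u w.
(* dom(Dring) = dom(- G^* ) *)
Definition domDring (y : H1) := exists z, adjG y z.

Definition negGadj_sub_D := forall y z, adjG y z -> domD y /\ D y = - z.

Definition ipG (u v : H0) := inner h0 u v + inner h1 (G u) (G v).
Definition ipD (p q : H1) := inner h1 p q + inner h0 (D p) (D q).

Definition BDG (u : H0) := domG u /\ forall v, domGring v -> ipG u v = 0.
Definition BDD (p : H1) := domD p /\ forall q, domDring q -> ipD p q = 0.

Definition projBDG (u p : H0) := BDG p /\ forall q, BDG q -> ipG (u - p) q = 0.
Definition projBDD (y p : H1) := BDD p /\ forall q, BDD q -> ipD (y - p) q = 0.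

Variables (m mstar : H0 -> H0) (a astar : H1 -> H1).

Definition coercive_op := exists mu : R, 0 < mu /\
  forall x, mu * complex.Re (inner h1 x x) <= complex.Re (inner h1 (a x) x).

Definition DtN_graph (p : H0) (q : H1) := exists u, [/\ domG u, domD (a (G u)),
  m u - D (a (G u)) = 0, projBDG u p & projBDD (a (G u)) q].
Definition dom_DtN (p : H0) := exists q, DtN_graph p q.

Definition ker_adj (v : H0) := exists w, [/\ Gring v w, domD (astar w) &
  mstar v = D (astar w)].

Definition is_Tring (T : H0 -> H0) := forall u, domGring u ->
  domGring (T u) /\ forall v, domGring v ->
     ipG (T u) v = inner h1 (a (G u)) (G v) + inner h0 (m u) v.

Definition Tring_closed_range (T : H0 -> H0) :=
  forall (x : nat -> H0) y, (forall n, exists u, domGring u /\ x n = T u) ->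
    domGring y -> ip_conv ipG x y -> exists u, domGring u /\ y = T u.

Definition Phi (q : H1) (u : H0) := inner h0 (D q) u + inner h1 q (G u).

End DtN.

(* Main.v *)
Require Import Defs.
From HB Require Import structures.
From mathcomp Require Import all_boot all_order all_algebra.
From mathcomp Require Import complex.
From mathcomp Require Import reals.
From mathcomp Require Import boolp classical_sets.
From mathcomp Require Import lra ring.
Import Order.TTheory GRing.Theory Num.Theory.
Local Open Scope ring_scope.
Local Open Scope complex_scope.

Section C.
Variable R : realType.
Local Notation C := (R[i]).
Lemma conjE (x : C) : Num.conj x = conjc x.
Proof.
rewrite {1}[x]Crect rmorphD rmorphM /= conjCi.
rewrite !conj_Creal ?Creal_Re ?Creal_Im //.
rewrite -complexRe -complexIm -complexiE.
case: x => a b /=. simpc. done.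
Qed.

Lemma ReD (a b : C) : complex.Re (a + b) = complex.Re a + complex.Re b.
Proof. by case: a => ? ?; case: b. Qed.
Lemma ReN (a : C) : complex.Re (- a) = - complex.Re a.
Proof. by case: a. Qed.
Lemma ReB (a b : C) : complex.Re (a - b) = complex.Re a - complex.Re b.
Proof. by rewrite ReD ReN. Qed.
Lemma ReJ (a : C) : complex.Re (conjc a) = complex.Re a.
Proof. by case: a. Qed.
Lemma ReRM (t : R) (a : C) : complex.Re (t%:C * a) = t * complex.Re a.
Proof. by case: a => ? ? /=; simpc. Qed.
Lemma Re_negi (a : C) : complex.Re (conjc 'i%C * a) = complex.Im a.
Proof. by case: a => ? ? /=; simpc. Qed.
Lemma ieq (a : C) : complex.Re ('i%C * conjc 'i%C * a) = complex.Re a.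
Proof. by case: a => ? ? /=; simpc. Qed.
Lemma RJ (t : R) : conjc (t%:C) = t%:C :> C.
Proof. by rewrite /= oppr0. Qed.
Lemma RRe_eq (a : C) : complex.Im a = 0 -> a = (complex.Re a)%:C.
Proof. by case: a => ? ? /= ->. Qed.
Lemma C_eq0 (a : C) : complex.Re a = 0 -> complex.Im a = 0 -> a = 0.
Proof. by case: a => ? ? /= -> ->. Qed.
Lemma ltC_pos (e : C) : 0 < e -> e = (complex.Re e)%:C /\ 0 < complex.Re e.
Proof.
rewrite ltcE /= => /andP[/eqP h1 h2]; split => //.
by apply: RRe_eq.
Qed.
End C.
Arguments conjE {R}. Arguments ReD {R}. Arguments ReN {R}. Arguments ReB {R}. Arguments ReJ {R}. Arguments ReRM {R}. Arguments Re_negi {R}. Arguments ieq {R}. Arguments RJ {R}. Arguments RRe_eq {R}. Arguments C_eq0 {R}. Arguments ltC_pos {R e}.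

Section Reals.
Variable R : realType.
Lemma quad (a b r : R) : 0 <= b ->
  (forall t : R, 0 <= a + 2 * t * r + t ^+ 2 * b) -> r ^+ 2 <= a * b.
Proof.
move=> b0 H; have a0 : 0 <= a by have := H 0; rewrite mulr0 mul0r expr0n /= mul0r !addr0.
have [bpos|] := ltP 0 b.
  have := H (- (r / b)); set u := r / b.
  have ru : r = u * b by rewrite /u mulfVK // gt_eqF.
  rewrite ru => h; nra.
rewrite le_eqVlt => /orP[/eqP b0'|]; last by rewrite ltNge b0.
rewrite b0' mulr0.
have [/eqP ->|rn] := boolP (r == 0); first by rewrite expr0n.
have := H (- (a + 1) / (2 * r)).
have -> : 2 * (- (a + 1) / (2 * r)) * r = - (a + 1) by field; rewrite rn.
rewrite b0' mulr0 addr0 => h; lra.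
Qed.

Lemma small0 (r K : R) : 0 <= K -> (forall e : R, 0 < e -> r ^+ 2 <= K * e) -> r = 0.
Proof.
move=> K0 H; apply/eqP; apply: contraT => rn.
have r2 : 0 < r ^+ 2 by rewrite lt_def sqr_ge0 sqrf_eq0 rn.
pose e := r ^+ 2 / (2 * (K + 1)).
have ep : 0 < e by rewrite divr_gt0 // mulr_gt0 //; lra.
have he : e * (2 * (K + 1)) = r ^+ 2 by rewrite /e mulfVK //; apply: lt0r_neq0; lra.
have := H e ep => h; nra.
Qed.

Lemma amgm (A B r d : R) : 0 <= A -> 0 <= B -> 0 < d -> r ^+ 2 <= A * B ->
  2 * r * d <= d ^+ 2 * A + B.
Proof.
move=> A0 B0 d0 h; rewrite leNgt; apply/negP => h2.
have h3 : 0 <= d ^+ 2 * A + B by rewrite addr_ge0 // mulr_ge0 // sqr_ge0.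
have h4 : (d ^+ 2 * A + B) ^+ 2 < (2 * r * d) ^+ 2.
  by rewrite ltr_pXn2r ?nnegrE //; lra.
have h5 : 0 <= (d ^+ 2 * A - B) ^+ 2 by rewrite sqr_ge0.
have h6 : d ^+ 2 * r ^+ 2 <= d ^+ 2 * (A * B) by rewrite ler_wpM2l // sqr_ge0.
nra.
Qed.

Lemma inv_le (M n : nat) : (M <= n)%N -> n.+1%:R^-1 <= M.+1%:R^-1 :> R.
Proof. by move=> h; rewrite lef_pV2 ?posrE ?ltr0n // ler_nat. Qed.
Lemma inv_gt0 (n : nat) : 0 < n.+1%:R^-1 :> R.
Proof. by rewrite invr_gt0 ltr0n. Qed.
Lemma archi_inv (c : R) : 0 < c -> exists M : nat, M.+1%:R^-1 < c.
Proof.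
move=> c0; exists (Num.Def.archi_bound (c^-1)).
set M := Num.Def.archi_bound _.
have ci : 0 < c^-1 by rewrite invr_gt0.
have h := archi_boundP (ltW ci); rewrite -/M in h.
rewrite -(invrK c) ltf_pV2 ?posrE ?ltr0n ?invr_gt0 //.
by apply: (lt_trans h); rewrite ltr_nat.
Qed.
End Reals.
Arguments quad {R a b r}. Arguments small0 {R r K}. Arguments amgm {R A B r d}. Arguments inv_le {R M n}. Arguments inv_gt0 {R}. Arguments archi_inv {R}.

Record sipT (R : realType) (V : lmodType R[i]) := SipT {
  sW : V -> Prop; sip : V -> V -> R[i];
  sW0 : sW 0;
  sWD : forall c x y, sW x -> sW y -> sW (c *: x + y);
  sipL : forall c x y z, sW x -> sW y -> sW z -> sip (c *: x + y) z = c * sip x z + sip y z;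
  sipH : forall x y, sW x -> sW y -> sip y x = conjc (sip x y);
  sipP : forall x, sW x -> 0 <= sip x x }.
Arguments sipT {R}. Arguments SipT {R V}. Arguments sW {R V}. Arguments sip {R V}. Arguments sW0 {R V}. Arguments sWD {R V}.
Arguments sipL {R V}. Arguments sipH {R V}. Arguments sipP {R V}.

Set Implicit Arguments. Unset Strict Implicit.
Section SIP.
Variable R : realType.
Local Notation C := (R[i]).
Variables (V : lmodType C) (SP : sipT V).
Local Notation W := (sW SP).
Local Notation ip := (sip SP).
Local Notation W0 := (sW0 SP).
Local Notation WD := (sWD SP).
Local Notation ipL := (sipL SP).
Local Notation ipH := (sipH SP).
Local Notation ipP := (sipP SP).

Lemma WDD {x y} : W x -> W y -> W (x + y).
Proof. by move=> ? ?; rewrite -[x]scale1r; apply: WD. Qed.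
Lemma WZ c {x} : W x -> W (c *: x).
Proof. by move=> ?; rewrite -[c *: x]addr0; apply: WD => //; exact: W0. Qed.
Lemma WN {x} : W x -> W (- x).
Proof. by move=> ?; rewrite -scaleN1r; apply: WZ. Qed.
Lemma WB {x y} : W x -> W y -> W (x - y).
Proof. by move=> ? ?; apply: WDD => //; apply: WN. Qed.

Lemma ip0l z : W z -> ip 0 z = 0.
Proof.
move=> Wz; have := @ipL 1 0 0 z W0 W0 Wz; rewrite scale1r addr0 mul1r => h.
by rewrite -(addrK (ip 0 z) (ip 0 z)) -h subrr.
Qed.
Lemma ipDl x y z : W x -> W y -> W z -> ip (x + y) z = ip x z + ip y z.
Proof. by move=> *; rewrite -[x]scale1r ipL // mul1r scale1r. Qed.
Lemma ipZl c x z : W x -> W z -> ip (c *: x) z = c * ip x z.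
Proof. by move=> *; have W0' := W0; rewrite -[c *: x]addr0 ipL // ip0l // addr0. Qed.
Lemma ipNl x z : W x -> W z -> ip (- x) z = - ip x z.
Proof. by move=> *; rewrite -scaleN1r ipZl // mulN1r. Qed.
Lemma ipBl x y z : W x -> W y -> W z -> ip (x - y) z = ip x z - ip y z.
Proof. move=> Wx Wy Wz; have Wny := WN Wy. by rewrite ipDl ?ipNl. Qed.
Lemma ipDr x y z : W x -> W y -> W z -> ip z (x + y) = ip z x + ip z y.
Proof.
move=> Wx Wy Wz; have Wxy := WDD Wx Wy.
rewrite (@ipH (x + y) z) // ipDl // rmorphD /= -!ipH //.
Qed.
Lemma ipZr c x z : W x -> W z -> ip z (c *: x) = conjc c * ip z x.
Proof. move=> Wx Wz; have Wcx := WZ c Wx. by rewrite (@ipH (c *: x) z) // ipZl // rmorphM /= -ipH. Qed.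
Lemma ipNr x z : W x -> W z -> ip z (- x) = - ip z x.
Proof. by move=> *; rewrite -scaleN1r ipZr // rmorphN rmorph1 mulN1r. Qed.
Lemma ipBr x y z : W x -> W y -> W z -> ip z (x - y) = ip z x - ip z y.
Proof. move=> Wx Wy Wz; have Wny := WN Wy. by rewrite ipDr ?ipNr. Qed.

Definition N x := complex.Re (ip x x).
Lemma ipNE x : W x -> ip x x = (N x)%:C.
Proof. by move=> Wx; apply: RRe_eq; apply: ger0_Im; apply: ipP. Qed.
Lemma N_ge0 {x} : W x -> 0 <= N x.
Proof. by move=> Wx; have := ipP x Wx; rewrite ipNE // ler0c. Qed.
Lemma ReipC {x y} : W x -> W y -> complex.Re (ip y x) = complex.Re (ip x y).
Proof. by move=> *; rewrite ipH // ReJ. Qed.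

Lemma N_D {x y} : W x -> W y -> N (x + y) = N x + N y + 2 * complex.Re (ip x y).
Proof.
move=> Wx Wy; have Wxy := WDD Wx Wy; rewrite /N ipDl // !ipDr // !ReD ReipC //.
rewrite /N; lra.
Qed.
Lemma N_B {x y} : W x -> W y -> N (x - y) = N x + N y - 2 * complex.Re (ip x y).
Proof.
move=> Wx Wy; have Wxy := WB Wx Wy; rewrite /N ipBl // !ipBr // !ReB ReipC //.
rewrite /N; lra.
Qed.
Lemma N_Z c x : W x -> N (c *: x) = complex.Re (c * conjc c * ip x x).
Proof. by move=> Wx; have Wcx := WZ c Wx; rewrite /N ipZl // ipZr // mulrA. Qed.
Lemma N_ZR t x : W x -> N (t%:C *: x) = t ^+ 2 * N x.
Proof.
move=> Wx; rewrite N_Z // RJ -rmorphM /= ReRM //.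
Qed.
Lemma N_N x : W x -> N (- x) = N x.
Proof. move=> Wx; rewrite -scaleN1r. have ->: (-1 : C) = (-1 : R)%:C by rewrite rmorphN rmorph1. by rewrite N_ZR // sqrrN expr1n mul1r. Qed.
Lemma Reip_ZR t x y : W x -> W y -> complex.Re (ip x (t%:C *: y)) = t * complex.Re (ip x y).
Proof. by move=> *; rewrite ipZr // RJ ReRM. Qed.
Lemma CS {x y} : W x -> W y -> complex.Re (ip x y) ^+ 2 <= N x * N y.
Proof.
move=> Wx Wy; apply: quad; first exact: N_ge0.
move=> t; have Wty := WZ (t%:C) Wy.
have := N_ge0 (WDD Wx Wty).
by rewrite N_D // N_ZR // Reip_ZR // => h; lra.
Qed.

Lemma N_i x : W x -> N ('i *: x) = N x.
Proof. by move=> Wx; rewrite N_Z // ieq. Qed.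
Lemma Re_ipi x y : W x -> W y -> complex.Re (ip x ('i *: y)) = complex.Im (ip x y).
Proof. by move=> *; rewrite ipZr // Re_negi. Qed.

Lemma ip_small a z : W a ->
  (forall e : R, 0 < e -> exists d, [/\ W d, N d < e & z = ip a d]) -> z = 0.
Proof.
move=> Wa H; apply: C_eq0.
- apply: (small0 (N_ge0 Wa)) => e ep; have [d [Wd Nd ->]] := H e ep.
  apply: (le_trans (CS Wa Wd)); apply: ler_wpM2l; [exact: N_ge0|exact: ltW].
- apply: (small0 (N_ge0 Wa)) => e ep; have [d [Wd Nd ->]] := H e ep.
  have Wid := WZ 'i Wd.
  rewrite -Re_ipi //; apply: (le_trans (CS Wa Wid)); rewrite N_i //.
  apply: ler_wpM2l; [exact: N_ge0|exact: ltW].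
Qed.

Lemma ipconvE {x} : W x -> forall {e : C}, 0 < e ->
  (ip x x < e) = (N x < complex.Re e).
Proof.
move=> Wx e /ltC_pos [he _]; by rewrite {1}he ipNE // ltcR.
Qed.

Lemma proj_thm (S : V -> Prop) :
  (forall x, S x -> W x) -> S 0 -> (forall c x y, S x -> S y -> S (c *: x + y)) ->
  (forall u : nat -> V, (forall n, S (u n)) -> ip_cauchy ip u ->
      exists l, S l /\ ip_conv ip u l) ->
  forall x, W x -> exists p, S p /\ forall s, S s -> ip (x - p) s = 0.
Proof.
move=> SW S0 HSD Scomp x Wx.
pose E : set R := fun r : R => exists s, S s /\ r = N (x - s).
have hE : has_inf E.
  split; first by exists (N (x - 0)); exists 0.
  exists 0 => r [s [Ss ->]]; apply: N_ge0; exact: WB Wx (SW _ Ss).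
set d := inf E.
have dlb : forall s, S s -> d <= N (x - s).
  by move=> s Ss; apply: (ge_inf hE.2); exists s.
have : forall n : nat, exists s, S s /\ N (x - s) < d + n.+1%:R^-1.
  move=> n; have [e [s [Ss ->]] lt] := inf_adherent (inv_gt0 n) hE.
  by exists s.
case/choice => sq Hsq.
have Sq n : S (sq n) := (Hsq n).1.
have Wq n : W (sq n) := SW _ (Sq n).
have par : forall n k, N (sq n - sq k) <= 2 * n.+1%:R^-1 + 2 * k.+1%:R^-1.
  move=> n k.
  have Wa := WB Wx (Wq n); have Wb := WB Wx (Wq k).
  have e1 : sq n - sq k = (x - sq k) - (x - sq n).
    by rewrite opprB [RHS]addrC addrA subrK.
  pose mid := (2^-1 : C) *: (sq n + sq k).
  have Smid : S mid.
    rewrite /mid -[_ *: _]addr0; apply: (HSD) => //.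
    by rewrite -[sq n]scale1r; apply: (HSD).
  have Wmid := SW _ Smid.
  have e2 : (x - sq n) + (x - sq k) = (2 : R)%:C *: (x - mid).
    rewrite scalerBr /mid scalerA rmorph_nat mulfV ?pnatr_eq0 // scale1r.
    by rewrite scaler_nat mulr2n opprD addrACA.
  have Wxm := WB Wx Wmid.
  have h1 := N_D Wa Wb; rewrite e2 N_ZR // in h1.
  have h2 := N_B Wb Wa; rewrite ReipC // in h2.
  have h3 := dlb _ Smid.
  have h4 := (Hsq n).2; have h5 := (Hsq k).2.
  rewrite e1 h2; rewrite expr2 in h1. set hn := n.+1%:R^-1 in h4 *. set hk := k.+1%:R^-1 in h5 *. set A := N (x - sq n) in h1 h2 h4 *. set B := N (x - sq k) in h1 h2 h5 *. set r := complex.Re _ in h1 h2 *. set D := N (x - mid) in h1 h3 *. lra.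
have cau : ip_cauchy ip sq.
  move=> e ep; have [he ep'] := ltC_pos ep.
  have [M hM] : exists M : nat, M.+1%:R^-1 < complex.Re e / 4.
    by apply: archi_inv; rewrite divr_gt0.
  exists M => n k hn hk; have Wnk := WB (Wq n) (Wq k); rewrite (ipconvE Wnk ep).
  have := par n k; have := inv_le (R:=R) hn; have := inv_le (R:=R) hk.
  set a1 := k.+1%:R^-1; set a2 := n.+1%:R^-1; set a3 := M.+1%:R^-1 in hM *; lra.
have [p [Sp conv]] := Scomp sq Sq cau.
have Wp := SW _ Sp.
have Wxp := WB Wx Wp.
have keyd : N (x - p) <= d.
  apply/ler_addgt0Pr => eps epsp.
  have d0 : 0 <= d by apply: lb_le_inf hE.1 _ => r [s [Ss ->]]; exact: N_ge0 (WB Wx (SW _ Ss)).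
  pose del := eps / (3 * (d + 1) + eps).
  have den : 0 < 3 * (d + 1) + eps by lra.
  have delp : 0 < del by rewrite divr_gt0.
  have hdel : del * (3 * (d + 1) + eps) = eps by rewrite /del mulfVK // gt_eqF.
  have del1 : del < 1 by nra.
  have deld : d * del <= eps / 3 by nra.
  pose eta := eps * del / (3 * (1 + del)).
  have etap : 0 < eta by apply: divr_gt0; [exact: mulr_gt0 | lra].
  have heta : eta * (3 * (1 + del)) = eps * del by rewrite /eta mulfVK //; apply: lt0r_neq0; lra.
  have etaC : (0 : C) < eta%:C by rewrite ltcR.
  have [N1 hN1] := conv _ etaC.
  have [M2 hM2] : exists M : nat, M.+1%:R^-1 < eps / 6 by apply: archi_inv; rewrite divr_gt0.
  pose n := maxn N1 M2.
  have Wb := WB (Wq n) Wp; have Wa := WB Wx (Wq n).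
  have hB := hN1 n (leq_maxl _ _); rewrite (ipconvE Wb etaC) in hB.
  rewrite /= in hB.
  have hA := (Hsq n).2.
  have hn := inv_le (R:=R) (leq_maxr N1 M2); rewrite -/n in hn.
  have e3 : x - p = (x - sq n) + (sq n - p) by rewrite addrA subrK.
  rewrite e3 N_D //.
  have hcs := CS Wa Wb.
  have ha := amgm (N_ge0 Wa) (N_ge0 Wb) delp hcs.
  set A := N (x - sq n) in hA ha hcs *; set B := N (sq n - p) in hB ha hcs *.
  set r := complex.Re _ in ha hcs *.
  set h := n.+1%:R^-1 in hA hn.
  have A0 : 0 <= A by exact: N_ge0.
  have B0 : 0 <= B by exact: N_ge0.
  have h0 : 0 < h by exact: inv_gt0.
  suff : del * (A + B + 2 * r) <= del * (d + eps) by rewrite ler_pM2l.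
  set a3 := M2.+1%:R^-1 in hM2 hn.
  have p1 : del * (1 + del) * A <= del * (1 + del) * (d + h).
    by apply: ler_wpM2l; [apply: mulr_ge0; lra | lra].
  have p2 : del * (d * del) <= del * (eps / 3) by apply: ler_wpM2l; lra.
  have p3 : del * h * del <= del * h * 1 by apply: ler_wpM2l; [apply: mulr_ge0; lra | lra].
  have p4 : del * h <= del * (eps / 6) by apply: ler_wpM2l; lra.
  have p5 : B * (1 + del) <= eta * (1 + del) by apply: ler_wpM2r; [lra | exact: ltW].
  rewrite /= in hB.
  lra.
have ReO : forall s, S s -> complex.Re (ip (x - p) s) = 0.
  move=> s Ss; have Ws := SW _ Ss.
  suff : (- complex.Re (ip (x - p) s)) ^+ 2 <= 0 * N s.
    by rewrite mul0r sqrrN => h; apply/eqP; rewrite -sqrf_eq0 eq_le h sqr_ge0.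
  apply: quad; first exact: N_ge0.
  move=> t; have Sp' := HSD t%:C s p Ss Sp.
  have := dlb _ Sp'.
  have -> : x - (t%:C *: s + p) = (x - p) - t%:C *: s.
    by rewrite opprD addrA addrAC.
  rewrite N_B //; last exact: WZ.
  rewrite N_ZR // Reip_ZR // => h; lra.
exists p; split => // s Ss; apply: C_eq0; first exact: ReO.
rewrite -Re_ipi //; last exact: SW.
by apply: ReO; rewrite -[_ *: s]addr0; apply: (HSD).
Qed.
Lemma orth_closed (v : nat -> V) (a l : V) : W a -> W l -> (forall n, W (v n)) ->
  (forall n, ip (v n) a = 0) -> ip_conv ip v l -> ip l a = 0.
Proof.
move=> Wa Wl Wv h conv.
suff : conjc (ip l a) = 0 by move/eqP; rewrite conjc_eq0 => /eqP.
apply: (ip_small Wa) => e ep.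
have eC : (0 : C) < e%:C by rewrite ltcR.
have [M hM] := conv _ eC.
have Wd := WB Wl (Wv M).
exists (l - v M); split => //.
  have := hM M (leqnn M); rewrite (ipconvE (WB (Wv M) Wl) eC) /=.
  by rewrite -N_N ?opprB //; exact: WB.
rewrite ipBr // (ipH _ _ (Wv M) Wa) h conjc0 subr0.
by rewrite (ipH _ _ Wl Wa).
Qed.
End SIP.
Set Implicit Arguments. Unset Strict Implicit.
Section P.
Variable R : realType.
Local Notation C := (R[i]).
Variables (X Y : lmodType C).
Lemma fstD (c : C) (x y : (X * Y)%type) : (c *: x + y).1 = c *: x.1 + y.1.
Proof. by []. Qed.
Lemma sndD (c : C) (x y : (X * Y)%type) : (c *: x + y).2 = c *: x.2 + y.2.
Proof. by []. Qed.
Lemma pair0 : (0 : (X * Y)%type) = (0, 0).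
Proof. by []. Qed.
Lemma fstB (x y : (X * Y)%type) : (x - y).1 = x.1 - y.1.
Proof. by []. Qed.
Lemma sndB (x y : (X * Y)%type) : (x - y).2 = x.2 - y.2.
Proof. by []. Qed.
End P.
Section P2.
Variable R : realType.
Local Notation C := (R[i]).
Variables (X Y : lmodType C) (hX : hilbert X) (hY : hilbert Y).
Definition pip (x y : (X * Y)%type) := inner hX x.1 y.1 + inner hY x.2 y.2.
Lemma pipL (c : C) (x y z : (X * Y)%type) : pip (c *: x + y) z = c * pip x z + pip y z.
Proof.
rewrite /pip fstD sndD !inner_linear mulrDr.
by rewrite addrACA.
Qed.
Lemma pipH (x y : (X * Y)%type) : pip y x = conjc (pip x y).
Proof. by rewrite /pip (inner_conj hX) (inner_conj hY) !conjE rmorphD. Qed.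
Lemma pipP (x : (X * Y)%type) : 0 <= pip x x.
Proof. by apply: addr_ge0; apply: inner_ge0. Qed.
Lemma pip_eq0 x : pip x x = 0 -> x = 0.
Proof.
case: x => x1 x2; rewrite /pip /= => /eqP.
rewrite paddr_eq0 ?inner_ge0 // => /andP[/eqP /inner_eq0 -> /eqP /inner_eq0 ->].
by [].
Qed.
Definition psip : sipT (X * Y)%type :=
  @SipT R _ (fun _ => True) pip I (fun _ _ _ _ _ => I)
    (fun c x y z _ _ _ => pipL c x y z) (fun x y _ _ => pipH x y) (fun x _ => pipP x).
End P2.
Section G.
Variable R : realType.
Local Notation C := (R[i]).
Variables (X Y : lmodType C) (hX : hilbert X) (hY : hilbert Y).
Variables (domA : X -> Prop) (A : X -> Y).
Hypothesis HA : dd_closed hX hY domA A.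
Definition gip (u v : X) := inner hX u v + inner hY (A u) (A v).
Lemma gd0 : domA 0. Proof. by case: HA. Qed.
Lemma gdD (c : C) x y : domA x -> domA y -> domA (c *: x + y).
Proof. by case: HA => _ h *; apply: h. Qed.
Lemma gAL (c : C) x y : domA x -> domA y -> A (c *: x + y) = c *: A x + A y.
Proof. by case: HA => _ _ h *; apply: h. Qed.
Lemma gipL (c : C) x y z : domA x -> domA y -> domA z -> gip (c *: x + y) z = c * gip x z + gip y z.
Proof. move=> *; rewrite /gip gAL // !inner_linear mulrDr; by rewrite addrACA. Qed.
Lemma gipH x y : gip y x = conjc (gip x y).
Proof. by rewrite /gip (inner_conj hX) (inner_conj hY) !conjE rmorphD. Qed.
Lemma gipP x : 0 <= gip x x.
Proof. by apply: addr_ge0; apply: inner_ge0. Qed.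
Definition gsip : sipT X :=
  @SipT R _ domA gip gd0 gdD (fun c x y z hx hy hz => gipL c hx hy hz)
    (fun x y _ _ => gipH x y) (fun x _ => gipP x).
End G.
Section H.
Variable R : realType.
Local Notation C := (R[i]).
Variables (X : lmodType C) (hX : hilbert X).
Definition hsip : sipT X :=
  @SipT R X (fun _ => True) (inner hX) I (fun _ _ _ _ _ => I)
   (fun c x y z _ _ _ => inner_linear hX c x y z)
   (fun x y _ _ => etrans (inner_conj hX x y) (conjE _))
   (fun x _ => inner_ge0 hX x).
End H.
Section HL.
Variable R : realType.
Local Notation C := (R[i]).
Variables (X : lmodType C) (h : hilbert X).
Lemma inDl x y z : inner h (x + y) z = inner h x z + inner h y z.
Proof. exact: (ipDl (SP := hsip h)). Qed.
Lemma inNl x z : inner h (- x) z = - inner h x z.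
Proof. exact: (ipNl (SP := hsip h)). Qed.
Lemma inBl x y z : inner h (x - y) z = inner h x z - inner h y z.
Proof. exact: (ipBl (SP := hsip h)). Qed.
Lemma inZl c x z : inner h (c *: x) z = c * inner h x z.
Proof. exact: (ipZl (SP := hsip h)). Qed.
Lemma inDr x y z : inner h z (x + y) = inner h z x + inner h z y.
Proof. exact: (ipDr (SP := hsip h)). Qed.
Lemma inNr x z : inner h z (- x) = - inner h z x.
Proof. exact: (ipNr (SP := hsip h)). Qed.
Lemma inBr x y z : inner h z (x - y) = inner h z x - inner h z y.
Proof. exact: (ipBr (SP := hsip h)). Qed.
Lemma inZr c x z : inner h z (c *: x) = conjc c * inner h z x.
Proof. exact: (ipZr (SP := hsip h)). Qed.
Lemma in0l z : inner h 0 z = 0.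
Proof. exact: (ip0l (SP := hsip h)). Qed.
Lemma in0r z : inner h z 0 = 0.
Proof. by rewrite (inner_conj h) in0l conjE conjc0. Qed.
Lemma inC x y : inner h y x = conjc (inner h x y).
Proof. by rewrite (inner_conj h) conjE. Qed.
End HL.
Set Implicit Arguments. Unset Strict Implicit.

Section G2.
Variable R : realType.
Local Notation C := (R[i]).
Variables (X Y : lmodType C) (hX : hilbert X) (hY : hilbert Y).
Variables (domA : X -> Prop) (A : X -> Y).
Hypothesis HA : dd_closed hX hY domA A.
Local Notation gipA := (gip hX hY A).

Lemma gA0 : A 0 = 0.
Proof.
have := gAL HA 1 (gd0 HA) (gd0 HA); rewrite !scale1r addr0 => h.
have : A 0 + A 0 - A 0 = A 0 - A 0 by rewrite -h.
by rewrite addrK subrr.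
Qed.
Lemma gdN x : domA x -> domA (- x).
Proof. by move=> hx; rewrite -scaleN1r -[_ *: x]addr0; apply: (gdD HA) => //; exact: gd0 HA. Qed.
Lemma gdB x y : domA x -> domA y -> domA (x - y).
Proof. by move=> hx hy; rewrite -[x]scale1r; apply: (gdD HA) => //; exact: gdN. Qed.
Lemma gAN x : domA x -> A (- x) = - A x.
Proof.
move=> hx; rewrite -scaleN1r -[_ *: x]addr0 (gAL HA _ hx (gd0 HA)) gA0 addr0.
by rewrite scaleN1r.
Qed.
Lemma gAB x y : domA x -> domA y -> A (x - y) = A x - A y.
Proof.
move=> hx hy; rewrite -[x]scale1r (gAL HA _ hx (gdN hy)) !scale1r gAN //.
Qed.

Lemma half_pos (e : C) : 0 < e -> 0 < e / 2.
Proof. by move=> ep; rewrite divr_gt0 // ltr0n. Qed.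

Lemma graph_complete (u : nat -> X) : (forall n, domA (u n)) -> ip_cauchy gipA u ->
  exists l, domA l /\ ip_conv gipA u l.
Proof.
move=> du cau.
have cX : ip_cauchy (inner hX) u.
  move=> e ep; have [M hM] := cau e ep; exists M => n k hn hk.
  apply: le_lt_trans (hM n k hn hk); rewrite /gip lerDl; exact: inner_ge0.
have cY : ip_cauchy (inner hY) (fun n => A (u n)).
  move=> e ep; have [M hM] := cau e ep; exists M => n k hn hk.
  apply: le_lt_trans (hM n k hn hk); rewrite /gip -gAB // lerDr; exact: inner_ge0.
have [x hx] := inner_complete cX.
have [y hy] := inner_complete cY.
have [dx Axy] := (match HA with And5 _ _ _ _ h => h end) u x y du hx hy.
exists x; split => // e ep.
have [M1 h1] := hx _ (half_pos ep); have [M2 h2] := hy _ (half_pos ep).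
exists (maxn M1 M2) => n hn.
rewrite /gip gAB // Axy (splitr e).
apply: ltrD; [apply: h1 | apply: h2]; apply: leq_trans hn; by rewrite ?leq_maxl ?leq_maxr.
Qed.

Local Notation PS := (psip hX hY).
Definition grS (v : (X * Y)%type) := domA v.1 /\ v.2 = A v.1.

Lemma pip_graph a b : grS a -> grS b ->
  sip PS (a - b) (a - b) = gipA (a.1 - b.1) (a.1 - b.1).
Proof.
case: a => a1 a2; case: b => b1 b2 [/= da ->] [/= db ->].
by rewrite /= /pip /gip /= gAB.
Qed.

Lemma grS_complete (u : nat -> (X * Y)%type) : (forall n, grS (u n)) ->
  ip_cauchy (sip PS) u -> exists l, grS l /\ ip_conv (sip PS) u l.
Proof.
move=> Su cau.
have cau' : ip_cauchy gipA (fun n => (u n).1).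
  move=> e ep; have [M hM] := cau e ep; exists M => n k hn hk.
  by rewrite -pip_graph //; apply: hM.
have [l [dl conv]] := graph_complete (fun n => (Su n).1) cau'.
have Sl : grS (l, A l) by [].
exists (l, A l); split => // e ep; have [M hM] := conv e ep; exists M => n hn.
by rewrite pip_graph //; apply: hM.
Qed.

Lemma adjadj x y :
  (forall p z, (forall u, domA u -> inner hY (A u) p = inner hX u z) ->
     inner hX x z = inner hY y p) -> domA x /\ A x = y.
Proof.
move=> H.
have S0 : grS 0 by split; [exact: gd0 HA | rewrite /= gA0].
have SD : forall c v w, grS v -> grS w -> grS (c *: v + w).
  move=> c [v1 v2] [w1 w2] [/= dv ->] [/= dw ->]; split => /=.
    exact: (gdD HA).
  by rewrite (gAL HA).
have [p [Sp orth]] := proj_thm (SP := PS) (fun _ _ => I) S0 SD grS_complete (x := (x, y)) I.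
set r := (x, y) - p in orth.
have adj : forall u, domA u -> inner hY (A u) r.2 = inner hX u (- r.1).
  move=> u du; have := orth (u, A u) (conj du erefl).
  rewrite /= /pip /= => h.
  have h' : inner hY r.2 (A u) = - inner hX r.1 u.
    by apply/eqP; rewrite -addr_eq0 addrC h.
  by rewrite inNr (inC hY r.2) h' rmorphN /= -inC.
have H2 := H _ _ adj.
have o1 : sip PS (x, y) r = 0.
  by rewrite /= /pip /= -H2 inNr addrN.
have o2 : sip PS p r = 0.
  by have := orth p Sp; rewrite /= => hp; rewrite pipH hp conjc0.
have o3 : sip PS ((x, y) - p) r = 0.
  by rewrite (ipBl (SP := PS)) // o1 o2 subrr.
have r0 : r = 0 by apply: pip_eq0; exact: o3.
move/subr0_eq: r0 => e; rewrite -e in Sp.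
by case: Sp => /= dx ->.
Qed.
End G2.
Set Implicit Arguments. Unset Strict Implicit.

Section Lin.
Variable R : realType.
Local Notation C := (R[i]).
Variables (X Y : lmodType C) (f : X -> Y).
Hypothesis fL : forall (c : C) x y, f (c *: x + y) = c *: f x + f y.
Lemma lf0 : f 0 = 0.
Proof.
have := fL 1 0 0; rewrite !scale1r addr0 => h.
have : f 0 + f 0 - f 0 = f 0 - f 0 by rewrite -h.
by rewrite addrK subrr.
Qed.
Lemma lfN x : f (- x) = - f x.
Proof. by rewrite -scaleN1r -[_ *: x]addr0 fL lf0 addr0 ?scaleN1r. Qed.
Lemma lfB x y : f (x - y) = f x - f y.
Proof. by have := fL 1 x (- y); rewrite !scale1r lfN. Qed.
Lemma lfZ c x : f (c *: x) = c *: f x.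
Proof. by rewrite -[_ *: x]addr0 fL lf0 addr0. Qed.
End Lin.

Section Main.
Variable R : realType.
Local Notation C := (R[i]).
Variables (H0 H1 : lmodType C) (h0 : hilbert H0) (h1 : hilbert H1)
  (domG : H0 -> Prop) (G : H0 -> H1) (domD : H1 -> Prop) (D : H1 -> H0)
  (m mstar : H0 -> H0) (a astar : H1 -> H1) (T : H0 -> H0).
Hypotheses (HG : dd_closed h0 h1 domG G) (HD : dd_closed h1 h0 domD D)
  (Hsub : negGadj_sub_D h0 h1 domG G domD D)
  (Hm : bounded_op h0 h0 m) (Hms : is_adjoint h0 h0 m mstar)
  (Ha : bounded_op h1 h1 a) (Has : is_adjoint h1 h1 a astar)
  (HT : is_Tring h0 h1 G domD D m a T)
  (HTc : Tring_closed_range h0 h1 G domD D T).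

Local Notation Gring := (Gring h0 h1 domD D).
Local Notation V := (domGring h0 h1 domD D).
Local Notation adjG := (adjG h0 h1 domG G).
Local Notation DR := (domDring h0 h1 domG G).
Local Notation ipG := (ipG h0 h1 G).
Local Notation ipD := (ipD h0 h1 D).
Local Notation SG := (gsip HG).
Local Notation SD := (gsip HD).

Lemma F1 u w : Gring u w -> domG u /\ G u = w.
Proof.
move=> hu; apply: (adjadj HG) => p z hadj.
have [dp Dp] := Hsub hadj.
have := hu p dp; rewrite Dp inNl inNr => /eqP; rewrite eqr_opp => /eqP h.
by rewrite inC h -inC.
Qed.

Lemma V_dom u : V u -> domG u.
Proof. by case=> w /F1 []. Qed.
Lemma V_Gring u : V u -> Gring u (G u).
Proof. by case=> w hw; have [_ ->] := F1 hw. Qed.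
Lemma V0 : V 0.
Proof. by exists 0 => y _; rewrite in0r oppr0 in0r. Qed.
Lemma VD c u v : V u -> V v -> V (c *: u + v).
Proof.
move=> /V_Gring hu /V_Gring hv; exists (c *: G u + G v) => y dy.
by rewrite inDr inZr hu // hv // opprD inDr -scalerN inZr.
Qed.

Lemma ipG_eq0 r : ipG r r = 0 -> r = 0.
Proof.
move/eqP; rewrite /Defs.ipG paddr_eq0 ?inner_ge0 // => /andP[/eqP /inner_eq0 -> _].
by [].
Qed.
Lemma ipD_eq0 r : ipD r r = 0 -> r = 0.
Proof.
move/eqP; rewrite /Defs.ipD paddr_eq0 ?inner_ge0 // => /andP[/eqP /inner_eq0 -> _].
by [].
Qed.

Lemma V_complete (u : nat -> H0) : (forall n, V (u n)) -> ip_cauchy ipG u ->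
  exists l, V l /\ ip_conv ipG u l.
Proof.
move=> Vu cau.
have du n : domG (u n) := V_dom (Vu n).
have [l [dl conv]] := graph_complete HG du cau.
exists l; split => //; exists (G l) => y dy.
have : sip (psip h0 h1) (l, G l) (D y, y) = 0.
  apply: (@orth_closed _ _ (psip h0 h1) (fun n => (u n, G (u n))) (D y, y) (l, G l)
    I I (fun _ => I)).
- move=> n; rewrite /= /pip /=.
  have hn := V_Gring (Vu n) dy.
  by rewrite (inC h0 (D y) (u n)) hn -inC inNl addNr.
- move=> e ep; have [M hM] := conv e ep; exists M => n hn.
  have gn : grS domG G (u n, G (u n)) by split; [exact: du|].
  have gl : grS domG G (l, G l) by split.
  by rewrite (pip_graph HG gn gl); apply: hM.
rewrite /= /pip /= => h.
rewrite inNr (inC h0 l (D y)) (inC h1 (G l) y); apply/eqP; rewrite -addr_eq0 -rmorphD /= h.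
by rewrite conjc0.
Qed.

Lemma DR_dom q : DR q -> domD q.
Proof. by case=> z /Hsub []. Qed.
Lemma DR_adj q : DR q -> adjG q (- D q).
Proof. by case=> z hz; have [_ ->] := Hsub hz; rewrite opprK. Qed.
Lemma DR0 : DR 0.
Proof. by exists 0 => x _; rewrite !in0r. Qed.
Lemma DRD c q q' : DR q -> DR q' -> DR (c *: q + q').
Proof.
case=> z hz [z' hz']; exists (c *: z + z') => x dx.
by rewrite inDr inZr hz // hz' // inDr inZr.
Qed.

Lemma DR_complete (q : nat -> H1) : (forall n, DR (q n)) -> ip_cauchy ipD q ->
  exists l, DR l /\ ip_conv ipD q l.
Proof.
move=> Dq cau.
have dq n : domD (q n) := DR_dom (Dq n).
have [l [dl conv]] := graph_complete HD dq cau.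
exists l; split => //; exists (- D l) => x dx.
have : sip (psip h1 h0) (l, D l) (G x, x) = 0.
  apply: (@orth_closed _ _ (psip h1 h0) (fun n => (q n, D (q n))) (G x, x) (l, D l)
    I I (fun _ => I)).
- move=> n; rewrite /= /pip /=.
  have hn := DR_adj (Dq n) dx.
  by rewrite (inC h1 (G x) (q n)) hn -inC inNl addNr.
- move=> e ep; have [M hM] := conv e ep; exists M => n hn.
  have gn : grS domD D (q n, D (q n)) by split; [exact: dq|].
  have gl : grS domD D (l, D l) by split.
  by rewrite (pip_graph HD gn gl); apply: hM.
rewrite /= /pip /= => h.
rewrite inNr (inC h1 l (G x)) (inC h0 (D l) x); apply/eqP; rewrite -addr_eq0 -rmorphD /= h.
by rewrite conjc0.
Qed.

Lemma projDR y : domD y -> exists p, DR p /\ forall q, DR q -> ipD (y - p) q = 0.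
Proof.
move=> dy.
exact: (@proj_thm _ _ SD DR DR_dom DR0 DRD DR_complete y dy).
Qed.

Local Notation BDG := (BDG h0 h1 domG G domD D).
Local Notation BDD := (BDD h0 h1 domG G domD D).
Local Notation projBDG := (projBDG h0 h1 domG G domD D).
Local Notation projBDD := (projBDD h0 h1 domG G domD D).
Local Notation Phi := (Phi h0 h1 G D).

Lemma ipDC p q : ipD q p = conjc (ipD p q).
Proof. exact: gipH. Qed.
Lemma ipGC p q : ipG q p = conjc (ipG p q).
Proof. exact: gipH. Qed.

Lemma BDD_proj y : domD y -> exists q, projBDD y q /\ DR (y - q).
Proof.
move=> dy; have [p [Dp orth]] := projDR dy.
have e : y - (y - p) = p by rewrite opprB addrC subrK.
exists (y - p); rewrite e; split => //; split.
  split; [exact: (gdB HD dy (DR_dom Dp)) | exact: orth].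
by move=> q [dq hq]; rewrite e ipDC hq // conjc0.
Qed.

Lemma BDD_diff y q : domD y -> projBDD y q -> DR (y - q).
Proof.
move=> dy [[dq hq] hp].
have dyq := gdB HD dy dq.
have [p [Dp orth]] := projDR dyq.
have dp := DR_dom Dp.
have dr := gdB HD dyq dp.
have Br : BDD (y - q - p) by split => // q' Dq'; exact: orth.
have e1 : ipD (y - q) (y - q - p) = 0 by exact: hp.
have e2 : ipD p (y - q - p) = 0 by rewrite ipDC orth // conjc0.
have e : ipD (y - q - p) (y - q - p) = ipD (y - q) (y - q - p) - ipD p (y - q - p).
  exact: (ipBl (SP := SD) dyq dp dr).
have r0 : y - q - p = 0 by apply: ipD_eq0; rewrite e e1 e2 subrr.
by move/subr0_eq: r0 => ->.
Qed.

Lemma Phi_DR p u : DR p -> domG u -> Phi p u = 0.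
Proof.
move=> Dp du; have := DR_adj Dp du => h.
rewrite /Defs.Phi (inC h1 (G u) p) h -inC inNl addrN //.
Qed.

Lemma Phi_B y q u : domD y -> domD q -> Phi (y - q) u = Phi y u - Phi q u.
Proof.
move=> dy dq; rewrite /Defs.Phi (gAB HD dy dq) !inBl opprD addrACA //.
Qed.

Lemma projV x : domG x -> exists p, V p /\ forall v, V v -> ipG (x - p) v = 0.
Proof.
move=> dx.
exact: (@proj_thm _ _ SG V V_dom V0 VD V_complete x dx).
Qed.

Lemma BDG_diff u u0 : domG u -> projBDG u u0 -> V (u - u0).
Proof.
move=> du [[du0 hu0] hp].
have duu := gdB HG du du0.
have [p [Vp orth]] := projV duu.
have dp := V_dom Vp.
have dr := gdB HG duu dp.
have Br : BDG (u - u0 - p) by split => // v Vv; exact: orth.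
have e1 : ipG (u - u0) (u - u0 - p) = 0 by exact: hp.
have e2 : ipG p (u - u0 - p) = 0 by rewrite ipGC orth // conjc0.
have e : ipG (u - u0 - p) (u - u0 - p) = ipG (u - u0) (u - u0 - p) - ipG p (u - u0 - p).
  exact: (ipBl (SP := SG) duu dp dr).
have r0 : u - u0 - p = 0 by apply: ipG_eq0; rewrite e e1 e2 subrr.
by move/subr0_eq: r0 => ->.
Qed.

Local Notation ker_adj := (ker_adj h0 h1 domD D mstar astar).

Lemma dir1 u0 : dom_DtN h0 h1 domG G domD D m a u0 ->
  BDG u0 /\ forall v q, ker_adj v -> projBDD (astar (G v)) q -> Phi q u0 = 0.
Proof.
case=> q0 [u [du daGu eq pG pD]].
have Bu0 := pG.1; split => //.
have du0 := Bu0.1.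
move=> v q [w [gw dw ms]] pq.
have [dv Gvw] := F1 gw; rewrite -Gvw in gw dw ms.
have dq : domD q := pq.1.1.
have Dyq := BDD_diff dw pq.
have -> : Phi q u0 = Phi (astar (G v)) u0.
  have h := Phi_B u0 dw dq; rewrite Phi_DR // in h.
  by apply/eqP; rewrite eq_sym -subr_eq0 -h.
have Vw0 := BDG_diff du pG.
have dw0 := V_dom Vw0.
have eu0 : u0 = u - (u - u0) by rewrite opprB addrC subrK.
have key : inner h0 (m u0) v + inner h1 (a (G u0)) (G v) = 0.
  rewrite eu0 (lfB Hm.1) (gAB HG du dw0) (lfB Ha.1) !inBl.
  have e1 : inner h0 (m u) v = - inner h1 (a (G u)) (G v).
    by rewrite (subr0_eq eq) (gw _ daGu) inNr.
  have e2 : inner h0 (m (u - u0)) v = - inner h1 (a (G (u - u0))) (G v).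
    by rewrite Hms ms (inC h0 (D (astar (G v))) (u - u0)) (V_Gring Vw0 dw) -inC inNl Has.
  rewrite e1 e2; ring.
rewrite /Defs.Phi -ms (inC h0 u0 (mstar v)) (inC h1 (G u0) (astar (G v))) -Hms -Has.
by rewrite -rmorphD /= key conjc0.
Qed.

Lemma VN x : V x -> V (- x).
Proof. by move=> h; rewrite -scaleN1r -[_ *: x]addr0; apply: VD => //; exact: V0. Qed.
Lemma VB x y : V x -> V y -> V (x - y).
Proof. by move=> hx hy; rewrite -[x]scale1r; apply: VD => //; exact: VN. Qed.

Lemma TV u : V u -> V (T u).
Proof. by move=> h; case: (HT h). Qed.
Lemma TE u v : V u -> V v -> ipG (T u) v = inner h1 (a (G u)) (G v) + inner h0 (m u) v.
Proof. by move=> hu hv; case: (HT hu) => _ ->. Qed.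

Lemma T_lin c u v : V u -> V v -> T (c *: u + v) = c *: T u + T v.
Proof.
move=> Vu Vv; have Vc := VD c Vu Vv.
have Vd : V (T (c *: u + v) - (c *: T u + T v)).
  by apply: VB; [exact: TV | apply: VD; exact: TV].
have z0 : forall z, V z -> ipG (T (c *: u + v) - (c *: T u + T v)) z = 0.
  move=> z Vz.
  have dz := V_dom Vz.
  have e : ipG (T (c *: u + v) - (c *: T u + T v)) z =
     ipG (T (c *: u + v)) z - (c * ipG (T u) z + ipG (T v) z).
    change (sip SG (T (c *: u + v) - (c *: T u + T v)) z =
      sip SG (T (c *: u + v)) z - (c * sip SG (T u) z + sip SG (T v) z)).
    have d1 := V_dom (TV Vc); have d2 := V_dom (TV Vu); have d3 := V_dom (TV Vv).
    have d4 := V_dom (VD c (TV Vu) (TV Vv)).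
    by rewrite (ipBl (SP := SG)) // (sipL SG).
  rewrite e !TE // (gAL HG _ (V_dom Vu) (V_dom Vv)) Ha.1 Hm.1 !inner_linear.
  ring.
by apply/eqP; rewrite -subr_eq0; apply/eqP; apply: ipG_eq0; apply: z0.
Qed.

Definition RT x := exists u, V u /\ x = T u.
Lemma T0 : T 0 = 0.
Proof.
have := T_lin 1 V0 V0; rewrite !scale1r addr0 => h.
have : T 0 + T 0 - T 0 = T 0 - T 0 by rewrite -h.
by rewrite addrK subrr.
Qed.
Lemma RT0 : RT 0.
Proof. by exists 0; split; [exact: V0 | rewrite T0]. Qed.
Lemma RTD c x y : RT x -> RT y -> RT (c *: x + y).
Proof.
case=> u [Vu ->] [v [Vv ->]]; exists (c *: u + v); split; first exact: VD.
by rewrite T_lin.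
Qed.
Lemma RT_dom x : RT x -> domG x.
Proof. by case=> u [Vu ->]; apply: V_dom; exact: TV. Qed.
Lemma RT_complete (x : nat -> H0) : (forall n, RT (x n)) -> ip_cauchy ipG x ->
  exists l, RT l /\ ip_conv ipG x l.
Proof.
move=> Rx cau.
have Vx n : V (x n) by case: (Rx n) => u [Vu ->]; exact: TV.
have [l [Vl conv]] := V_complete Vx cau.
exists l; split => //.
have [u [Vu ->]] := HTc (fun n => match Rx n with ex_intro u (conj h1 h2) => ex_intro _ u (conj h1 h2) end) Vl conv.
by exists u.
Qed.
Lemma projR x : domG x -> exists r, RT r /\ forall z, RT z -> ipG (x - r) z = 0.
Proof.
move=> dx.
exact: (@proj_thm _ _ SG RT RT_dom RT0 RTD RT_complete x dx).
Qed.

Definition GS (z : (H0 * H1)%type) := V z.1 /\ z.2 = G z.1.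
Lemma GS0 : GS 0.
Proof. by split; [exact: V0 | rewrite /= (gA0 HG)]. Qed.
Lemma GSD c z w : GS z -> GS w -> GS (c *: z + w).
Proof.
case: z => z1 z2; case: w => w1 w2 [/= Vz ->] [/= Vw ->]; split => /=.
  exact: VD.
by rewrite (gAL HG _ (V_dom Vz) (V_dom Vw)).
Qed.
Lemma GS_complete (u : nat -> (H0 * H1)%type) : (forall n, GS (u n)) ->
  ip_cauchy (sip (psip h0 h1)) u -> exists l, GS l /\ ip_conv (sip (psip h0 h1)) u l.
Proof.
move=> Su cau.
have gr : forall z, GS z -> grS domG G z by move=> z [Vz e]; split => //; exact: V_dom.
have cau' : ip_cauchy ipG (fun n => (u n).1).
  move=> e ep; have [M hM] := cau e ep; exists M => n k hn hk.
  have := hM n k hn hk; by rewrite (pip_graph HG (gr _ (Su n)) (gr _ (Su k))).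
have [l [Vl conv]] := V_complete (fun n => (Su n).1) cau'.
have Sl : GS (l, G l) by [].
exists (l, G l); split => // e ep; have [M hM] := conv e ep; exists M => n hn.
by rewrite (pip_graph HG (gr _ (Su n)) (gr _ Sl)); apply: hM.
Qed.
Lemma projGS g : exists z, GS z /\ forall w, GS w -> sip (psip h0 h1) (g - z) w = 0.
Proof.
exact: (@proj_thm _ _ (psip h0 h1) GS (fun _ _ => I) GS0 GSD GS_complete g I).
Qed.

Lemma Gring_neg p z : (forall q, domD q -> inner h0 (D q) p = inner h1 q z) ->
  V p /\ G p = - z.
Proof.
move=> h; have g : Gring p (- z) by move=> y dy; rewrite opprK; exact: h.
have [dp Gp] := F1 g; split => //; exists (- z) => //.
Qed.

Lemma dir2 u0 : BDG u0 ->
  (forall v q, ker_adj v -> projBDD (astar (G v)) q -> Phi q u0 = 0) ->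
  dom_DtN h0 h1 domG G domD D m a u0.
Proof.
move=> Bu0 H.
have du0 := Bu0.1.
have [[p pz2] [[/= Vp ep] orthG]] := projGS (m u0, a (G u0)).
have phi : forall v, V v -> inner h0 (m u0) v + inner h1 (a (G u0)) (G v) = ipG p v.
  move=> v Vv; have := orthG (v, G v) (conj Vv erefl).
  rewrite /= /pip /= ep !inBl => h.
  by apply/eqP; rewrite -subr_eq0 /Defs.ipG opprD addrACA h.
have [r0 [[w1 [Vw1 er0]] orthR]] := projR (V_dom Vp).
rewrite er0 in orthR.
pose s := p - T w1.
have Vs : V s by apply: VB => //; exact: TV.
have ds := V_dom Vs.
have kerS : forall u, V u -> inner h1 (a (G u)) (G s) + inner h0 (m u) s = 0.
  move=> u Vu; rewrite -TE // ipGC orthR ?conjc0 //; by exists u.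
have [dys Dys] : domD (astar (G s)) /\ D (astar (G s)) = mstar s.
  apply: (adjadj HD) => p' z hp.
  have [Vp' Gp'] := Gring_neg hp.
  have := kerS _ Vp'; rewrite Has Hms Gp' inNl => h.
  have h' : inner h1 z (astar (G s)) = inner h0 p' (mstar s).
    by apply/eqP; rewrite eq_sym -subr_eq0 addrC h.
  by rewrite (inC h1 z) h' -inC.
have kS : ker_adj s by exists (G s); split => //; exact: V_Gring.
have [q [pq _]] := BDD_proj dys.
have Hq := H s q kS pq.
have dq : domD q := pq.1.1.
have Py : Phi (astar (G s)) u0 = 0.
  have h := Phi_B u0 dys dq; rewrite Phi_DR // in h; last exact: BDD_diff.
  by move: h; rewrite Hq subr0 => <-.
have ps0 : ipG p s = 0.
  move: Py; rewrite /Defs.Phi Dys (inC h0 u0 (mstar s)) (inC h1 (G u0) (astar (G s))).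
  rewrite -Hms -Has -rmorphD /= phi // => /eqP; rewrite conjc_eq0 => /eqP //.
have s0 : s = 0.
  apply: ipG_eq0.
  have dT := V_dom (TV Vw1); have dp := V_dom Vp.
  have e : ipG s s = ipG p s - ipG (T w1) s by exact: (ipBl (SP := SG) dp dT ds).
  rewrite e ps0 ipGC orthR ?conjc0 ?subrr //; by exists w1.
have epT : p = T w1 by apply/eqP; rewrite -subr_eq0; apply/eqP.
pose u := u0 - w1.
have dw1 := V_dom Vw1.
have du : domG u := gdB HG du0 dw1.
have weak : forall v, V v -> inner h1 (a (G u)) (G v) + inner h0 (m u) v = 0.
  move=> v Vv.
  rewrite /u (gAB HG du0 dw1) (lfB Ha.1) (lfB Hm.1) !inBl.
  have := phi v Vv; rewrite epT TE // => h.
  rewrite -[RHS](subrr (inner h0 (m u0) v + inner h1 (a (G u0)) (G v))).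
  rewrite {2}h; ring.
have [daGu DaGu] : domD (a (G u)) /\ D (a (G u)) = m u.
  apply: (adjadj HD) => p' z hp.
  have [Vp' Gp'] := Gring_neg hp.
  have := weak _ Vp'; rewrite Gp' inNr => h.
  by apply/eqP; rewrite -subr_eq0 -opprB addrC h oppr0.
have [q' [pq' _]] := BDD_proj daGu.
exists q', u; split => //.
- by rewrite DaGu subrr.
- split => // q2 [dq2 hq2].
  have -> : u - u0 = - w1 by rewrite /u addrAC subrr add0r.
  have e : ipG (- w1) q2 = - ipG w1 q2 by exact: (ipNl (SP := SG) dw1 dq2).
  by rewrite e ipGC hq2 // conjc0 oppr0.
Qed.
End Main.


Unset Implicit Arguments.
Set Strict Implicit.
Local Close Scope complex_scope.
Theorem corollary5p4 (R : realType) (H0 H1 : lmodType R[i])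
  (h0 : hilbert H0) (h1 : hilbert H1)
  (domG : H0 -> Prop) (G : H0 -> H1) (domD : H1 -> Prop) (D : H1 -> H0)
  (m mstar : H0 -> H0) (a astar : H1 -> H1) (T : H0 -> H0) :
  dd_closed h0 h1 domG G ->
  dd_closed h1 h0 domD D ->
  negGadj_sub_D h0 h1 domG G domD D ->
  bounded_op h0 h0 m -> is_adjoint h0 h0 m mstar ->
  bounded_op h1 h1 a -> is_adjoint h1 h1 a astar ->
  coercive_op h1 a ->
  is_Tring h0 h1 G domD D m a T ->
  Tring_closed_range h0 h1 G domD D T ->
  forall u0 : H0,
    dom_DtN h0 h1 domG G domD D m a u0 <->
    (BDG h0 h1 domG G domD D u0 /\
     forall v q, ker_adj h0 h1 domD D mstar astar v ->
       projBDD h0 h1 domG G domD D (astar (G v)) q ->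
       Phi h0 h1 G D q u0 = 0).
Proof.
move=> HG HD Hsub Hm Hms Ha Has _ HT HTc u0; split.
- exact: (dir1 HG HD Hsub Hm Hms Ha Has).
- by case; exact: (dir2 HG HD Hsub Hm Hms Ha Has HT HTc).
Qed.
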